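(* Let $t\ge 2$ be an integer and let $G_1,G_2,\dots,G_t$ be cyclically orderable graphs, each with at least two vertices, with $d(G_1)=d(G_2)=\cdots=d(G_t)$. Then any series composition $G_1\oplus G_2\oplus\cdots\oplus G_t$ is cyclically orderable.
   Context: The density of a connected graph $G$ with at least two vertices is $d(G)=\frac{|E(G)|}{|V(G)|-1}$. A cyclic base ordering (CBO) of a connected graph $G$ is a bijection $\mathcal{O}:E(G)\to\{1,\dots,|E(G)|\}$ such that for every $i\in\{1,\dots,|E(G)|\}$ the edges $\mathcal{O}^{-1}(i),\dots,\mathcal{O}^{-1}(i+|V(G)|-2)$ (indices taken cyclically modulo $|E(G)|$) induce a spanning tree of $G$; $G$ is cyclically orderable if it has a CBO. Given graphs $G$ and $H$ (vertex-disjoint) with $u\in V(G)$ and $v\in V(H)$, the series composition $G\oplus H$ is obtained from the disjoint union of $G$ and $H$ by identifying $u$ and $v$ into a single vertex. $G_1\oplus\cdots\oplus G_t$ denotes an iterated series composition $(\cdots(G_1\oplus G_2)\oplus\cdots)\oplus G_t$ with arbitrary choices of glued vertices at each step. *)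

(* Defs.v *)
From HB Require Import structures.
From mathcomp Require Import all_boot all_order all_algebra.
Set Implicit Arguments. Unset Strict Implicit. Unset Printing Implicit Defensive.

Record sgraph := SGraph {
  vert : finType;
  edges : {set {set vert}};
  edges2 : [forall e in edges, #|e| == 2]
}.

Definition adjF (V : finType) (F : {set {set V}}) : rel V :=
  fun x y => [set x; y] \in F.

Definition connectedF (V : finType) (F : {set {set V}}) : Prop :=
  forall x y : V, connect (adjF F) x y.

Definition connected_graph (G : sgraph) : Prop := connectedF (edges G).

Definition spanning_tree (G : sgraph) (F : {set {set vert G}}) : Prop :=
  F \subset edges G /\ connectedF F /\
  forall e, e \in F -> ~ connectedF (F :\ e).

Arguments spanning_tree : clear implicits.

Definition density (G : sgraph) : rat :=
  (#|edges G|%:R / (#|vert G| - 1)%:R)%R.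

Definition window (G : sgraph) (s : seq {set vert G}) (i : nat)
  : {set {set vert G}} :=
  [set nth set0 s ((i + val k) %% size s) | k : 'I_(#|vert G| - 1)].

Arguments window : clear implicits.

(* A cyclic base ordering, given as the sequence O^{-1}(1), ..., O^{-1}(|E|):
   a duplicate-free enumeration of all edges, every cyclic window of
   |V|-1 consecutive edges inducing a spanning tree. *)
Definition is_CBO (G : sgraph) (s : seq {set vert G}) : Prop :=
  perm_eq s (enum (edges G)) /\
  forall i, i < size s -> spanning_tree G (window G s i).

Arguments is_CBO : clear implicits.

Definition cyclically_orderable (G : sgraph) : Prop :=
  connected_graph G /\ exists s, is_CBO G s.

(* K is (isomorphic to) the series composition of G and H obtained by
   identifying u in V(G) with v in V(H), for some choice of u and v. *)
Definition series_comp (G H K : sgraph) : Prop :=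
  exists (u : vert G) (v : vert H) (f : vert G -> vert K) (g : vert H -> vert K),
    [/\ injective f, injective g, f u = g v &
        (forall x y, f x = g y -> x = u /\ y = v)] /\
    (forall z, (exists x, f x = z) \/ (exists y, g y = z)) /\
    edges K = [set f @: (e : {set vert G}) | e in edges G]
              :|: [set g @: (e : {set vert H}) | e in edges H].

(* series_of G t K : K is an iterated series composition
   (...((G 0 (+) G 1) (+) G 2) ... ) (+) G (t-1), with arbitrary glued vertices. *)
Inductive series_of (G : nat -> sgraph) : nat -> sgraph -> Prop :=
| series_one : series_of G 1 (G 0)
| series_step n K0 K : series_of G n.+1 K0 -> series_comp K0 (G n.+1) K ->
    series_of G n.+2 K.

(* Main.v *)
Require Import Defs.
From mathcomp Require Import all_boot all_order all_algebra zify.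
Set Implicit Arguments. Unset Strict Implicit. Unset Printing Implicit Defensive.

Section Cnt.
Variables (lo w c : nat).
Hypothesis (Hw : 0 < w) (Hc : lo + w <= c).

Definition cnt j := (j %/ c) * w + minn (j %% c - lo) w.
Definition sel j := (lo <= j %% c) && (j %% c < lo + w).

Lemma c_gt0 : 0 < c. Proof. lia. Qed.

Lemma cntS j : cnt j.+1 = cnt j + sel j.
Proof.
have c0 := c_gt0.
have hr := ltn_pmod j c0.
have ej : j.+1 = j %/ c * c + (j %% c).+1 by rewrite addnS -divn_eq.
rewrite /cnt /sel.
case: (ltngtP (j %% c).+1 c) => hc'; last first.
- rewrite ej hc'.
  have -> : j %/ c * c + c = (j %/ c).+1 * c by rewrite mulSn addnC.
  rewrite mulnK // modnMl mulSn.
  case: (boolP (lo <= j %% c)) => /= h1;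
  case: (boolP (j %% c < lo + w)) => /= h2; lia.
- lia.
- rewrite ej divnMDl // modnMDl (divn_small hc') (modn_small hc') addn0.
  case: (boolP (lo <= j %% c)) => /= h1;
  case: (boolP (j %% c < lo + w)) => /= h2; lia.
Qed.

Lemma cnt0 : cnt 0 = 0.
Proof. rewrite /cnt div0n mod0n; lia. Qed.

Lemma cnt_mono j k : j <= k -> cnt j <= cnt k.
Proof.
move=> /subnKC <-; elim: (k - j) => [|n IH]; first by rewrite addn0.
rewrite addnS cntS; lia.
Qed.

Lemma cntDM j t : cnt (j + t * c) = cnt j + t * w.
Proof.
have c0 := c_gt0.
rewrite /cnt (addnC j) divnMDl // modnMDl; lia.
Qed.

Lemma cnt_surj y : exists j, sel j /\ cnt j = y.
Proof.
have c0 := c_gt0.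
exists ((y %/ w) * c + (lo + y %% w)).
have hm : (lo + y %% w) < c by have := ltn_pmod y Hw; lia.
rewrite /sel /cnt divnMDl // modnMDl (modn_small hm) (divn_small hm) addn0.
have := ltn_pmod y Hw; split; first by apply/andP; split; lia.
have -> : minn (lo + y %% w - lo) w = y %% w by lia.
rewrite [in RHS](divn_eq y w); lia.
Qed.

Lemma cnt_window i l y :
  (cnt i <= y < cnt i + l * w) <->
  exists j, [/\ i <= j, j < i + l * c, sel j & cnt j = y].
Proof.
split.
  move=> /andP [h1 h2]; have [j [hs hj]] := cnt_surj y.
  exists j; split => //.
  - rewrite leqNgt; apply/negP => hji.
    have := cnt_mono hji; rewrite cntS hs; lia.
  - rewrite ltnNge; apply/negP => hji.
    have := cnt_mono hji; rewrite cntDM; lia.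
move=> [j [h1 h2 hs <-]]; apply/andP; split; first exact: cnt_mono.
have := cnt_mono h2; rewrite cntS hs cntDM; lia.
Qed.

End Cnt.

Section Merge.
Variables (a b p : nat) (T : Type) (FG FH : nat -> T).
Hypotheses (Ha : 0 < a) (Hb : 0 < b).
Local Notation c := (a + b).

Definition M j := if j %% c < a then FG (cnt 0 a c j) else FH (cnt a b c j).

Lemma selG j : sel 0 a c j = (j %% c < a).
Proof. by rewrite /sel leq0n. Qed.

Lemma selH j : sel a b c j = ~~ (j %% c < a).
Proof. have := @ltn_pmod j c (ltn_addr _ Ha); rewrite /sel; lia. Qed.

Lemma merge_window i l E :
  (exists k, k < l * c /\ E = M (i + k)) <->
  (exists k, k < l * a /\ E = FG (cnt 0 a c i + k)) \/
  (exists k, k < l * b /\ E = FH (cnt a b c i + k)).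
Proof.
have HcG : 0 + a <= c by lia.
have HcH : a + b <= c by [].
split.
  move=> [k [hk ->]]; rewrite /M.
  case: ifP => hs.
    left; have hs' : sel 0 a c (i + k) by rewrite selG.
    have /(cnt_window Ha HcG) : exists j, [/\ i <= j, j < i + l * c, sel 0 a c j
                      & cnt 0 a c j = cnt 0 a c (i + k)].
      exists (i + k); split => //; lia.
    move=> /andP [h1 h2].
    exists (cnt 0 a c (i + k) - cnt 0 a c i); split; first lia.
    congr FG; lia.
  right; have hs' : sel a b c (i + k) by rewrite selH hs.
  have /(cnt_window Hb HcH) : exists j, [/\ i <= j, j < i + l * c, sel a b c j
                    & cnt a b c j = cnt a b c (i + k)].
    exists (i + k); split => //; lia.
  move=> /andP [h1 h2].
  exists (cnt a b c (i + k) - cnt a b c i); split; first lia.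
  congr FH; lia.
move=> [[k [hk ->]]|[k [hk ->]]].
  have : cnt 0 a c i <= cnt 0 a c i + k < cnt 0 a c i + l * a by lia.
  move=> /(cnt_window Ha HcG) [j [h1 h2 hs hj]].
  exists (j - i); split; first lia.
  rewrite subnKC // /M -selG hs hj //.
have : cnt a b c i <= cnt a b c i + k < cnt a b c i + l * b by lia.
move=> /(cnt_window Hb HcH) [j [h1 h2 hs hj]].
exists (j - i); split; first lia.
rewrite subnKC // /M; move: hs; rewrite selH => /negbTE -> ; by rewrite hj.
Qed.

Hypotheses (HFG : forall x, FG (x + p * a) = FG x)
           (HFH : forall x, FH (x + p * b) = FH x).

Lemma M_period x t : M (x + t * (p * c)) = M x.
Proof.
have HcG : 0 + a <= c by lia.
have HcH : a + b <= c by [].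
elim: t => [|t IH]; first by rewrite addn0.
rewrite mulSn addnA -IH /M.
have -> : x + p * c + t * (p * c) = (x + t * (p * c)) + p * c by lia.
move: (x + t * (p * c)) => y.
have -> : (y + p * c) %% c = y %% c by rewrite addnC modnMDl.
by rewrite (cntDM Ha HcG) (cntDM Hb HcH) HFG HFH.
Qed.

Lemma M_mod x : M (x %% (p * c)) = M x.
Proof. by rewrite [in RHS](divn_eq x (p * c)) (addnC (_ * _)) M_period. Qed.

End Merge.

Lemma connect_map (T T' : finType) (e : rel T) (e' : rel T') (h : T -> T') :
  (forall x y, e x y -> h x = h y \/ e' (h x) (h y)) ->
  forall x y, connect e x y -> connect e' (h x) (h y).
Proof.
move=> He x y /connectP [p Hp ->]; elim: p x Hp => [|z p IH] x /=.
  by rewrite connect0.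
move=> /andP [hxz hp]; apply: connect_trans (IH _ hp).
by case: (He _ _ hxz) => [->|hh]; [rewrite connect0|apply: connect1].
Qed.

Definition imgE (V W : finType) (f : V -> W) (A : {set {set V}}) : {set {set W}} :=
  [set f @: (e : {set V}) | e in A].

Lemma imset2f (V W : finType) (f : V -> W) x y : f @: [set x; y] = [set f x; f y].
Proof. by rewrite imsetU1 imset_set1. Qed.

Lemma adj_img (V W : finType) (f : V -> W) (A : {set {set V}}) (C : {set {set W}}) x y :
  imgE f A \subset C -> adjF A x y -> adjF C (f x) (f y).
Proof.
move=> /subsetP hs hxy; apply: hs; rewrite /adjF -imset2f.
by apply/imsetP; exists [set x; y].
Qed.

Section Transfer.
Variables (V1 V2 W : finType) (f : V1 -> W) (g : V2 -> W) (u : V1) (v : V2).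
Hypotheses (finj : injective f) (ginj : injective g) (fgu : f u = g v)
  (fg : forall x y, f x = g y -> x = u /\ y = v)
  (cover : forall z, (exists x, f x = z) \/ (exists y, g y = z)).

Lemma connected_img (A : {set {set V1}}) (B : {set {set V2}}) :
  connectedF A -> connectedF B -> connectedF (imgE f A :|: imgE g B).
Proof.
move=> cA cB.
have hf : forall x y, connect (adjF (imgE f A :|: imgE g B)) (f x) (f y).
  move=> x y; apply: (connect_map (e := adjF A) (h := f)) (cA x y) => a b hab; right.
  by apply: adj_img hab; apply: subsetUl.
have hg : forall x y, connect (adjF (imgE f A :|: imgE g B)) (g x) (g y).
  move=> x y; apply: (connect_map (e := adjF B) (h := g)) (cB x y) => a b hab; right.
  by apply: adj_img hab; apply: subsetUr.
move=> z w; apply: (@connect_trans _ _ (f u)).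
  by case: (cover z) => [[x <-]|[y <-]]; [apply: hf| rewrite fgu; apply: hg].
by case: (cover w) => [[x <-]|[y <-]]; [apply: hf| rewrite fgu; apply: hg].
Qed.

Definition proj (z : W) : V1 := if [pick x | f x == z] is Some x then x else u.

Lemma proj_f x : proj (f x) = x.
Proof.
rewrite /proj; case: pickP => [x' /eqP /finj //|].
by move=> /(_ x); rewrite eqxx.
Qed.

Lemma proj_g y : proj (g y) = u.
Proof.
rewrite /proj; case: pickP => [x' /eqP /fg [] //|//].
Qed.

Lemma min_side (A : {set {set V1}}) (B : {set {set V2}}) :
  (forall e, e \in A -> ~ connectedF (A :\ e)) ->
  forall e0, e0 \in A -> ~ connectedF ((imgE f A :|: imgE g B) :\ (f @: e0)).
Proof.
move=> hA e0 he0 conn; apply: (hA e0 he0) => x y.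
rewrite -(proj_f x) -(proj_f y); apply: (connect_map _ (conn (f x) (f y))).
move=> z w; rewrite /adjF => /setD1P [hne /setUP [] /imsetP [e1 he1 he]].
  have /imsetP [a ha hza] : z \in f @: e1 by rewrite -he !inE eqxx.
  have /imsetP [b hb hwb] : w \in f @: e1 by rewrite -he !inE eqxx orbT.
  right; rewrite hza hwb !proj_f.
  have e1E : [set a; b] = e1 by apply: (imset_inj finj); rewrite /= imset2f -hza -hwb.
  apply/setD1P; split; last by rewrite e1E.
  by apply: contra hne => /eqP h; rewrite he -e1E h.
have /imsetP [a ha ->] : z \in g @: e1 by rewrite -he !inE eqxx.
have /imsetP [b hb ->] : w \in g @: e1 by rewrite -he !inE eqxx orbT.
by left; rewrite !proj_g.
Qed.

End Transfer.

Section Card.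
Variables (V1 V2 W : finType) (f : V1 -> W) (g : V2 -> W) (u : V1) (v : V2).
Hypotheses (finj : injective f) (ginj : injective g) (fgu : f u = g v)
  (fg : forall x y, f x = g y -> x = u /\ y = v)
  (cover : forall z, (exists x, f x = z) \/ (exists y, g y = z)).

Lemma card_vert : #|W| = #|V1| + #|V2| - 1.
Proof.
have eT : [set: W] = f @: [set: V1] :|: g @: [set: V2].
  apply/setP => z; rewrite !inE; symmetry; apply/orP.
  case: (cover z) => [[x <-]|[y <-]]; [left|right]; apply/imsetP; by eexists.
have eI : f @: [set: V1] :&: g @: [set: V2] = [set f u].
  apply/setP => z; rewrite !inE; apply/andP/eqP.
    move=> [/imsetP [x _ ->] /imsetP [y _ /fg [-> _]]] //.
  move=> ->; split; apply/imsetP; [by exists u| by exists v].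
by rewrite -cardsT eT cardsU eI cards1 !card_imset // !cardsT.
Qed.

Lemma card_img2 (A : {set {set V1}}) (B : {set {set V2}}) :
  (forall e, e \in A -> #|e| = 2) ->
  #|imgE f A :|: imgE g B| = #|A| + #|B|.
Proof.
move=> hA.
have eI : imgE f A :&: imgE g B = set0.
  apply/setP => E; rewrite !inE; apply/negP => /andP [/imsetP [e1 he1 hE1] /imsetP [e2 he2 hE2]].
  have c2 : #|E| = 2 by rewrite hE1 card_imset // hA.
  have : E \subset [set f u].
    apply/subsetP => z hz; rewrite inE.
    move: (hz); rewrite {1}hE1 => /imsetP [x _ hx].
    move: hz; rewrite hE2 => /imsetP [y _ hy].
    have hxy : f x = g y by rewrite -hx -hy.
    by have [hxu _] := fg hxy; rewrite hx hxu.
  by move=> /subset_leq_card; rewrite cards1 c2.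
rewrite cardsU eI cards0 subn0 !card_imset //; exact: imset_inj.
Qed.

End Card.

Lemma st_img (G H K : sgraph) (f : vert G -> vert K) (g : vert H -> vert K) u v :
  injective f -> injective g -> f u = g v ->
  (forall x y, f x = g y -> x = u /\ y = v) ->
  (forall z, (exists x, f x = z) \/ (exists y, g y = z)) ->
  edges K = imgE f (edges G) :|: imgE g (edges H) ->
  forall A B, spanning_tree G A -> spanning_tree H B ->
  spanning_tree K (imgE f A :|: imgE g B).
Proof.
move=> finj ginj fgu fg cover EK A B [sA [cA mA]] [sB [cB mB]].
split; [|split].
- by rewrite EK; apply: setUSS; apply: imsetS.
- exact: (connected_img fgu cover cA cB).
move=> e /setUP [] /imsetP [e0 he0 ->].
  exact: (min_side finj fg mA).
rewrite setUC; apply: (min_side ginj _ mB) => //.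
by move=> y x /esym /fg [-> ->].
Qed.

Lemma ratio_split m n1 m' n1' : 0 < n1 -> 0 < n1' -> m * n1' = m' * n1 ->
  exists p q a b, [/\ 0 < a, 0 < b, m = p * a, n1 = q * a & m' = p * b /\ n1' = q * b].
Proof.
move=> h1 h1' heq.
set g := gcdn m n1.
have g0 : 0 < g by rewrite gcdn_gt0 h1 orbT.
set p := m %/ g; set q := n1 %/ g.
have em : m = p * g by rewrite divnK // dvdn_gcdl.
have en : n1 = q * g by rewrite divnK // dvdn_gcdr.
have cop : coprime q p.
  rewrite /coprime gcdnC; apply/eqP.
  have : g = gcdn p q * g by rewrite muln_gcdl -em -en.
  move=> h; apply/eqP; rewrite -(eqn_pmul2r g0) mul1n; apply/eqP; exact: esym h.
have q0 : 0 < q by move: h1; rewrite en; lia.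
have hpq : p * n1' = m' * q.
  apply/eqP; rewrite -(eqn_pmul2r g0); apply/eqP.
  by rewrite mulnAC -em heq en mulnA.
have : q %| p * n1' by rewrite hpq dvdn_mull.
rewrite Gauss_dvdr // => /dvdnP [b hb].
exists p, q, g, b; split => //.
- by move: h1'; rewrite hb; lia.
split.
- apply/eqP; rewrite -(eqn_pmul2r q0); apply/eqP.
  by rewrite -hpq hb mulnA mulnAC.
- by rewrite hb mulnC.
Qed.

Lemma mem_window (G : sgraph) s i E :
  E \in window G s i <->
  exists k, k < #|vert G| - 1 /\ E = nth set0 s ((i + k) %% size s).
Proof.
split.
  by move=> /imsetP [k _ ->]; exists (val k); split; first exact: ltn_ord.
move=> [k [hk ->]]; apply/imsetP; by exists (Ordinal hk).
Qed.

Lemma window_mod (G : sgraph) s i : window G s i = window G s (i %% size s).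
Proof.
apply/setP => E; apply/idP/idP => /mem_window [k [hk ->]]; apply/mem_window;
  exists k; split => //; by rewrite modnDml.
Qed.

Lemma edges_pos (V : finType) (E : {set {set V}}) :
  1 < #|V| -> connectedF E -> 0 < #|E|.
Proof.
move=> /card_gt1P [x [y [_ _ hxy]]] /(_ x y) /connectP [[|z p] hp hy].
  by move: hxy; rewrite hy /= eqxx.
move: hp => /= /andP [hxz _]; apply/card_gt0P; by exists [set x; z].
Qed.
Import GRing.Theory Num.Theory.

Lemma density_eq (G H : sgraph) : 1 < #|vert G| -> 1 < #|vert H| ->
  density G = density H ->
  #|edges G| * (#|vert H| - 1) = #|edges H| * (#|vert G| - 1).
Proof.
move=> hG hH; rewrite /density => /eqP; rewrite eqr_div ?pnatr_eq0 -?lt0n ?subn_gt0 //.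
by rewrite -!natrM eqr_nat => /eqP.
Qed.

Lemma comp_CO (G H K : sgraph) : series_comp G H K ->
  1 < #|vert G| -> 1 < #|vert H| ->
  cyclically_orderable G -> cyclically_orderable H -> density G = density H ->
  [/\ cyclically_orderable K, 1 < #|vert K| & density K = density G].
Proof.
move=> [u [v [f [g [[finj ginj fgu fg] [cover EK]]]]]] hG hH
  [cG [sG [pG wG]]] [cH [sH [pH wH]]] dGH.
have cardV : #|vert K| = #|vert G| + #|vert H| - 1 by apply: (card_vert finj ginj fgu fg cover).
have e2G : forall e, e \in edges G -> #|e| = 2.
  by move=> e he; move/forall_inP: (edges2 G) => /(_ e he) /eqP.
have cardEK : #|edges K| = #|edges G| + #|edges H|.
  rewrite EK. have := @card_img2 _ _ _ f g u v finj ginj fg (edges G) (edges H) e2G. by move=> X; exact: X.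
have mpos := edges_pos hG cG.
have heq := density_eq hG hH dGH.
have [p [q [a [b [a0 b0 em en [em' en']]]]]] :=
  ratio_split (ltac:(lia) : 0 < #|vert G| - 1) (ltac:(lia) : 0 < #|vert H| - 1) heq.
have p0 : 0 < p by move: mpos; rewrite em; lia.
have q0 : 0 < q by move: hG; lia.
have szG : size sG = p * a by rewrite (perm_size pG) -cardE em.
have szH : size sH = p * b by rewrite (perm_size pH) -cardE em'.
pose FG x := f @: nth set0 sG (x %% (p * a)).
pose FH x := g @: nth set0 sH (x %% (p * b)).
pose s := mkseq (M a b FG FH) (p * (a + b)).
have szs : size s = p * (a + b) by rewrite size_mkseq.
have HFG : forall x, FG (x + p * a) = FG x by move=> x; rewrite /FG modnDr.
have HFH : forall x, FH (x + p * b) = FH x by move=> x; rewrite /FH modnDr.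
have nths : forall j, nth set0 s (j %% (p * (a + b))) = M a b FG FH j.
  move=> j; rewrite nth_mkseq ?ltn_pmod ?muln_gt0 ?p0 ?addn_gt0 ?a0 //.
  exact: M_mod.
have dK : density K = density G.
  rewrite /density cardEK cardV.
  have -> : #|vert G| + #|vert H| - 1 - 1 = (#|vert G| - 1) + (#|vert H| - 1) by lia.
  rewrite em en em' en'; apply/eqP.
  rewrite eqr_div; last 2 first.
  - rewrite pnatr_eq0; nia.
  - rewrite pnatr_eq0; nia.
  rewrite -!natrM eqr_nat.
  apply/eqP; nia.
split => //; last by rewrite cardV; lia.
split.
  rewrite /connected_graph EK; exact: (connected_img fgu cover cG cH).
exists s; split.
  have c00 : forall lo w, cnt lo w (a + b) 0 = 0 by move=> lo w; rewrite /cnt div0n mod0n; lia.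
  have memS : forall E, (E \in s) = (E \in edges K).
    move=> E; apply/idP/idP.
      move=> /mapP [j hj ->]; rewrite mem_iota add0n in hj.
      have := proj1 (@merge_window a b _ FG FH a0 b0 0 p (M a b FG FH j))
        (ex_intro _ j (conj hj erefl)).
      rewrite !c00 EK.
      move=> [[k [hk ->]]|[k [hk ->]]]; apply/setUP; [left|right]; apply/imsetP.
        exists (nth set0 sG k); last by rewrite /FG (modn_small hk).
        by rewrite -mem_enum -(perm_mem pG) mem_nth // szG.
      exists (nth set0 sH k); last by rewrite /FH (modn_small hk).
      by rewrite -mem_enum -(perm_mem pH) mem_nth // szH.
    rewrite EK => /setUP [] /imsetP [e he ->].
      move: he; rewrite -mem_enum -(perm_mem pG) => /(nthP set0) [k hk hke].
      have : exists j, j < p * (a + b) /\ FG k = M a b FG FH (0 + j).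
        apply/(@merge_window a b _ FG FH a0 b0 0 p (FG k)); left; exists k.
        by rewrite c00; split => //; rewrite szG in hk.
      move=> [j [hj hE]]; apply/mapP; exists j; first by rewrite mem_iota add0n.
      by rewrite -hE /FG -szG modn_small // hke.
    move: he; rewrite -mem_enum -(perm_mem pH) => /(nthP set0) [k hk hke].
      have : exists j, j < p * (a + b) /\ FH k = M a b FG FH (0 + j).
      apply/(@merge_window a b _ FG FH a0 b0 0 p (FH k)); right; exists k.
      by rewrite c00; split => //; rewrite szH in hk.
    move=> [j [hj hE]]; apply/mapP; exists j; first by rewrite mem_iota add0n.
    by rewrite -hE /FH -szH modn_small // hke.
  have us : uniq s.
    apply: (leq_size_uniq (enum_uniq (mem (edges K)))).
      by move=> E; rewrite mem_enum memS.
    rewrite szs -cardE cardEK em em'; lia.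
  apply: uniq_perm => //; first exact: enum_uniq.
  by move=> E; rewrite mem_enum memS.
move=> i _.
have vK : #|vert K| - 1 = q * (a + b) by rewrite cardV; nia.
have wKi : window K s i = imgE f (window G sG (cnt 0 a (a + b) i))
                         :|: imgE g (window H sH (cnt a b (a + b) i)).
  apply/setP => E; apply/idP/idP.
    move=> /mem_window [k [hk ->]]; rewrite szs nths.
    rewrite vK in hk.
    have := proj1 (@merge_window a b _ FG FH a0 b0 i q (M a b FG FH (i + k)))
      (ex_intro _ k (conj hk erefl)).
    move=> [[k' [hk' ->]]|[k' [hk' ->]]]; apply/setUP; [left|right]; apply/imsetP.
      exists (nth set0 sG ((cnt 0 a (a + b) i + k') %% size sG)); last by rewrite /FG szG.
      by apply/mem_window; exists k'; split => //; lia.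
    exists (nth set0 sH ((cnt a b (a + b) i + k') %% size sH)); last by rewrite /FH szH.
    by apply/mem_window; exists k'; split => //; lia.
  move=> /setUP [] /imsetP [e /mem_window [k' [hk' ->]] ->]; apply/mem_window.
    have : exists k, k < q * (a + b) /\ FG (cnt 0 a (a + b) i + k') = M a b FG FH (i + k).
      apply/(@merge_window a b _ FG FH a0 b0 i q); left; exists k'; split => //; lia.
    move=> [k [hk hE]]; exists k; rewrite vK szs nths -hE /FG szG; split => //.
  have : exists k, k < q * (a + b) /\ FH (cnt a b (a + b) i + k') = M a b FG FH (i + k).
      apply/(@merge_window a b _ FG FH a0 b0 i q); right; exists k'; split => //; lia.
  move=> [k [hk hE]]; exists k; rewrite vK szs nths -hE /FH szH; split => //.
rewrite wKi; apply: (st_img finj ginj fgu fg cover EK).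
  rewrite window_mod; apply: wG; rewrite ltn_pmod // szG muln_gt0 p0 a0 //.
rewrite window_mod; apply: wH; rewrite ltn_pmod // szH muln_gt0 p0 b0 //.
Qed.

Theorem mainTheorem7 (t : nat) (G : nat -> sgraph) (K : sgraph) :
  2 <= t ->
  (forall i, i < t -> 2 <= #|vert (G i)|) ->
  (forall i, i < t -> cyclically_orderable (G i)) ->
  (forall i j, i < t -> j < t -> density (G i) = density (G j)) ->
  series_of G t K ->
  cyclically_orderable K.
Proof.
move=> ht hV hC hD hS.
suff : forall n K, series_of G n K -> n <= t ->
    [/\ cyclically_orderable K, 1 < #|vert K| & density K = density (G 0)].
  by move=> /(_ t K hS (leqnn t)) [].
move=> n K0; elim=> [|m K1 K2 hs IH hc] hn.
  have h0 : 0 < t by apply: leq_trans hn.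
  by split; [apply: hC | apply: hV |].
have hm1 : m.+1 < t by [].
have [c1 v1 d1] := IH (ltnW hn).
have [c2 v2 d2] := comp_CO hc v1 (hV _ hm1) c1 (hC _ hm1)
  (etrans d1 (hD 0 m.+1 (leq_ltn_trans (leq0n _) hm1) hm1)).
by split => //; rewrite d2 d1.
Qed.
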